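(* Let $K$ be a commutative ring, $R$ a $K$-algebra, $\mathcal{G}$ a finite groupoid and $\beta=(\{E_g\}_{g\in\mathcal G},\{\beta_g\}_{g\in\mathcal G})$ a unital action of $\mathcal G$ on $R$ such that $R=\bigoplus_{e\in\mathcal G_0}E_e$ and $R$ is a $\beta$-Galois extension of $R^\beta$. Let $H$ be a subgroupoid of $\mathcal G$ and put $R_H=\bigoplus_{e\in H_0}E_e$, where $H_0=H\cap\mathcal G_0$. Then $\beta_H=(\{E_h\}_{h\in H},\{\beta_h:E_{h^{-1}}\to E_h\}_{h\in H})$ is an action of $H$ on $R_H$, and $R_H$ is a $\beta_H$-Galois extension of $(R_H)^{\beta_H}$.
   Context: All rings and algebras are associative and unital. A groupoid is a nonempty set $\mathcal G$ with a partially defined associative multiplication in which every $g$ has an inverse $g^{-1}$, a left identity $r(g)=gg^{-1}$ and a right identity $d(g)=g^{-1}g$; the product $gh$ is defined iff $d(g)=r(h)$. $\mathcal G_0$ denotes the set of identities of $\mathcal G$. A subgroupoid is a nonempty subset $H$ closed under inverses and under those products that are defined. A unital action of $\mathcal G$ on a $K$-algebra $R$ is a pair $\beta=(\{E_g\},\{\beta_g\})$ where for each $g\in\mathcal G$, $E_g=E_{r(g)}$ is an ideal of $R$ which is a unital ring with identity $1_g$ (so $1_g=1_{r(g)}$ and $1_{g^{-1}}=1_{d(g)}$), $\beta_g:E_{g^{-1}}\to E_g$ is an isomorphism of $K$-algebras, $\beta_e=\mathrm{id}_{E_e}$ for all $e\in\mathcal G_0$, and $\beta_g(\beta_h(x))=\beta_{gh}(x)$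 whenever $d(g)=r(h)$ and $x\in E_{h^{-1}}$. For a subgroupoid $H$ acting on a ring $A$ via $\beta_H$, $A^{\beta_H}=\{a\in A:\beta_h(a1_{h^{-1}})=a1_h \text{ for all } h\in H\}$; $R^\beta=R^{\beta_{\mathcal G}}$. $A$ is a $\beta_H$-Galois extension of $A^{\beta_H}$ if $H$ is finite and there exist $x_1,\dots,x_m,y_1,\dots,y_m\in A$ with $\sum_{i=1}^m x_i\beta_h(y_i1_{h^{-1}})=1_h$ if $h\in H_0$ and $=0$ if $h\in H\setminus H_0$. *)

(* Defs.v *)
From HB Require Import structures.
From mathcomp Require Import all_boot all_order all_algebra.
Set Implicit Arguments. Unset Strict Implicit. Unset Printing Implicit Defensive.
Import GRing.Theory.
Local Open Scope ring_scope.

(* A finite groupoid: a finite type G with a product gmul (meaningful only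
   when gd g = gr h) and an inversion ginv; gr g := g g^-1, gd g := g^-1 g. *)
Record groupoid (G : finType) := Groupoid {
  gmul : G -> G -> G;
  ginv : G -> G }.

Section GroupoidDefs.
Variables (G : finType) (Gd : groupoid G).
Definition gr (g : G) : G := gmul Gd g (ginv Gd g).
Definition gd (g : G) : G := gmul Gd (ginv Gd g) g.

Definition is_groupoid : Prop :=
  (forall g h, gd g = gr h -> gr (gmul Gd g h) = gr g) /\
  (forall g h, gd g = gr h -> gd (gmul Gd g h) = gd h) /\
  (forall g h k, gd g = gr h -> gd h = gr k ->
      gmul Gd (gmul Gd g h) k = gmul Gd g (gmul Gd h k)) /\
  (forall g, gd (gr g) = gr g /\ gmul Gd (gr g) g = g) /\
  (forall g, gr (gd g) = gd g /\ gmul Gd g (gd g) = g) /\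
  (forall g, gd (ginv Gd g) = gr g /\ gr (ginv Gd g) = gd g).

Definition gid : {set G} := [set gr g | g : G].

Definition subgroupoid (H : {set G}) : Prop :=
  [/\ H != set0,
      (forall h, h \in H -> ginv Gd h \in H)
    & (forall g h, g \in H -> h \in H -> gd g = gr h -> gmul Gd g h \in H)].

Definition sub_id (H : {set G}) : {set G} := H :&: gid.
End GroupoidDefs.

Section ActionDefs.
Variables (K : comPzRingType) (R : pzRingType) (phi : {rmorphism K -> R}).
Variables (G : finType) (Gd : groupoid G).

Definition ideal_of (A I : pred R) : Prop :=
  [/\ {subset I <= A}, 0 \in I,
      (forall x y, x \in I -> y \in I -> x - y \in I)
    & (forall a x, a \in A -> x \in I -> a * x \in I /\ x * a \in I)].

Definition unit_of (I : pred R) (e : R) : Prop :=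
  e \in I /\ (forall x, x \in I -> e * x = x /\ x * e = x).

Definition kalg_iso (I J : pred R) (f : R -> R) : Prop :=
  (forall x, x \in I -> f x \in J) /\
  (forall x y, x \in I -> y \in I -> f (x + y) = f x + f y) /\
  (forall x y, x \in I -> y \in I -> f (x * y) = f x * f y) /\
  (forall k x, x \in I -> f (phi k * x) = phi k * f x) /\
  {in I &, injective f} /\
  (forall y, y \in J -> exists2 x, x \in I & f x = y).

(* beta = ({E_g}, {beta_g}) is a unital action of the subgroupoid D on the
   ring A (a subset of R closed under addition and product); one g is the identity 1_g of E_g *)
Definition unital_action (D : {set G}) (A : pred R) (E : G -> pred R)
    (one : G -> R) (beta : G -> R -> R) : Prop :=
  (forall g, g \in D -> E g =1 E (gr Gd g)) /\
  (forall g, g \in D -> ideal_of A (E g)) /\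
  (forall g, g \in D -> unit_of (E g) (one g)) /\
  (forall g, g \in D -> kalg_iso (E (ginv Gd g)) (E g) (beta g)) /\
  (forall e, e \in sub_id Gd D -> forall x, x \in E e -> beta e x = x) /\
  (forall g h, g \in D -> h \in D -> gd Gd g = gr Gd h ->
     forall x, x \in E (ginv Gd h) ->
       beta g (beta h x) = beta (gmul Gd g h) x).

Definition galois_ext (D : {set G}) (A : pred R) (one : G -> R)
    (beta : G -> R -> R) : Prop :=
  exists m (x y : 'I_m -> R),
    [/\ (forall i, x i \in A), (forall i, y i \in A) &
      forall h, h \in D ->
        \sum_(i < m) x i * beta h (y i * one (ginv Gd h)) =
          if h \in gid Gd then one h else 0].

Definition direct_sum (A : pred R) (S : {set G}) (E : G -> pred R) : Prop :=
  (forall a, a \in A <->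
     exists2 f : G -> R, (forall e, e \in S -> f e \in E e) &
       a = \sum_(e in S) f e) /\
  (forall f : G -> R, (forall e, e \in S -> f e \in E e) ->
     \sum_(e in S) f e = 0 -> forall e, e \in S -> f e = 0).
End ActionDefs.

(* Main.v *)
Require Import Defs.
From HB Require Import structures.
From mathcomp Require Import all_boot all_order all_algebra.
Import GRing.Theory.
Local Open Scope ring_scope.

Theorem mainTheorem1 (K : comPzRingType) (R : pzRingType)
  (phi : {rmorphism K -> R}) (phi_central : forall k x, phi k * x = x * phi k)
  (G : finType) (Gd : groupoid G) (HGd : is_groupoid Gd)
  (E : G -> pred R) (one : G -> R) (beta : G -> R -> R)
  (Hact : unital_action phi Gd [set: G] predT E one beta)
  (Hsum : direct_sum predT (gid Gd) E)
  (Hgal : galois_ext Gd [set: G] predT one beta)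
  (H : {set G}) (HH : subgroupoid Gd H)
  (RH : pred R) (HRH : direct_sum RH (sub_id Gd H) E) :
  unital_action phi Gd H RH E one beta /\ galois_ext Gd H RH one beta.
Proof.
have [HE [Hid [Hun [Hiso [Hidn Hcomp]]]]] := Hact.
have [_ [_ [_ [_ [_ Hinv]]]]] := HGd.
have [_ HHinv HHmul] := HH.
have inT : forall g : G, g \in [set: G] by move=> g; rewrite inE.
have Egr : forall k w, (w \in E k) = (w \in E (gr Gd k)).
  by move=> k w; rewrite -!topredE /= (HE k (inT k)).
have grH : forall k, k \in H -> gr Gd k \in sub_id Gd H.
  move=> k kH; rewrite /sub_id inE; apply/andP; split.
    apply: HHmul => //; first exact: HHinv.
    by rewrite (proj2 (Hinv k)).
  by rewrite /gid; apply: imset_f.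
have grG : forall k, gr Gd k \in gid Gd by move=> k; apply: imset_f.
have subG : forall e, e \in sub_id Gd H -> e \in gid Gd.
  by move=> e; rewrite /sub_id inE => /andP[].
have E0 : forall e, (0 : R) \in E e by move=> e; have [] := Hid e (inT e).
have disj : forall e1 e2 w, e1 \in gid Gd -> e2 \in gid Gd -> e1 != e2 ->
    w \in E e1 -> w \in E e2 -> w = 0.
  move=> e1 e2 w g1 g2 ne w1 w2.
  pose f := fun e => if e == e1 then w else if e == e2 then - w else 0.
  have fE : forall e, e \in gid Gd -> f e \in E e.
    move=> e _; rewrite /f; case: eqP => [->//|_]; case: eqP => [->|_] //.
    have [_ _ Hs _] := Hid e2 (inT e2).
    by rewrite -sub0r; apply: Hs.
  have := (proj2 Hsum) f fE _ e1 g1; rewrite /f eqxx; apply.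
  rewrite (bigD1 e1) //= (bigD1 e2) /=; last by rewrite g2 eq_sym.
  rewrite big1 /=; last by move=> e /andP[/andP[_ /negPf ->] /negPf ->].
  rewrite (eq_sym e2 e1) (negPf ne) addr0 !eqxx; exact: (addrN w).
pose p := \sum_(e in sub_id Gd H) one e.
have pw : forall k w, k \in H -> w \in E k -> p * w = w.
  move=> k w kH wk; rewrite Egr in wk.
  rewrite /p mulr_suml (bigD1 (gr Gd k)) ?grH //= big1 ?addr0.
    by have [_ U] := Hun _ (inT (gr Gd k)); have [] := U w wk.
  move=> e /andP[eH ne]; apply: (disj e (gr Gd k)) => //; first exact: subG.
  - have [_ _ _ M] := Hid e (inT e); have [u _] := Hun e (inT e).
    by have [] := M w (one e) isT u.
  - have [_ _ _ M] := Hid _ (inT (gr Gd k)).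
    by have [] := M (one e) w isT wk.
have inRH : forall e0 x, e0 \in sub_id Gd H -> x \in E e0 -> x \in RH.
  move=> e0 x e0H xE; apply/(proj1 HRH).
  exists (fun e => if e == e0 then x else 0).
    by move=> e _; case: eqP => [->|_].
  rewrite (bigD1 e0) //= eqxx big1 ?addr0 //.
  by move=> e /andP[_ /negPf ->].
split.
  split; first by move=> g _; apply: HE.
  split.
    move=> g gH; have [S Z Sb M] := Hid g (inT g); split => //; last by move=> a x _ xE; apply: M.
    move=> x xE; apply: (inRH (gr Gd g)); first exact: grH.
    by rewrite -Egr.
  split; first by move=> g _; apply: Hun.
  split; first by move=> g _; apply: Hiso.
  split.
    move=> e; rewrite /sub_id !inE => /andP[_ eg]; apply: Hidn.
    by rewrite /sub_id !inE.
  by move=> g h _ _; apply: Hcomp.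
have [m [x [y [_ _ Hs]]]] := Hgal.
exists m, (fun i => x i * p), (fun i => p * y i); split.
- move=> i; apply/(proj1 HRH); exists (fun e => x i * one e).
    move=> e _; have [_ _ _ M] := Hid e (inT e); have [u _] := Hun e (inT e).
    by have [] := M (x i) (one e) isT u.
  by rewrite /p mulr_sumr.
- move=> i; apply/(proj1 HRH); exists (fun e => one e * y i).
    move=> e _; have [_ _ _ M] := Hid e (inT e); have [u _] := Hun e (inT e).
    by have [] := M (y i) (one e) isT u.
  by rewrite /p mulr_suml.
move=> h hH; rewrite -(Hs h (inT h)); apply: eq_bigr => i _.
have hiH := HHinv h hH.
have w1 : y i * one (ginv Gd h) \in E (ginv Gd h).
  have [_ _ _ M] := Hid _ (inT (ginv Gd h)); have [u _] := Hun _ (inT (ginv Gd h)).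
  by have [] := M (y i) _ isT u.
rewrite -(mulrA p (y i)) (pw _ _ hiH w1) -(mulrA (x i) p) (pw h) //.
by have [Hm _] := Hiso h (inT h); apply: Hm.
Qed.
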